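(* Fix $k$, $\theta^{(k)}\in\mathbb{R}^d$, step sizes $h_k,h_{k-1}>0$, $\beta_k\ge 0$, and a vector $p^{(k-1)}\in\mathbb{R}^d$; set $\theta^{(k-1)}=\theta^{(k)}-h_{k-1}p^{(k-1)}$. Define the natural Heavy-Ball momentum $$p^{(k)}=\beta_k\,G_X^{(k)\dagger}G_X^{(k,k-1)}p^{(k-1)}-h_k\,G^{(k)\dagger}\nabla L(\theta^{(k)})$$ and the quasi-natural Heavy-Ball momentum $$\overline{p^{(k)}}=\beta_k\,p^{(k-1)}-h_k\,G^{(k)\dagger}\nabla L(\theta^{(k)}).$$ Then $$\big\|\psi^{(k)T}\overline{p^{(k)}}-\psi^{(k)T}p^{(k)}\big\|_X\le h_{k-1}\,\beta_k\,\kappa_{\max}(\theta^{(k)})\,\|p^{(k-1)}\|_2^2+o\big(h_{k-1}\|p^{(k-1)}\|_2^2\big),$$ where the remainder $o(h_{k-1}\|p^{(k-1)}\|_2^2)$ is understood as $h_{k-1}\|p^{(k-1)}\|_2\to 0$ with $\theta^{(k)}$ fixed.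
   Context: $D:\mathbb{R}^d\to H$ is a twice continuously Fréchet differentiable map into a space $H$ of functions equipped with an inner product $(\cdot,\cdot)_X$ and norm $\|\cdot\|_X$ (the model class is $\mathcal{M}=D(\mathbb{R}^d)$). Write $\psi(\theta)=(\psi_1(\theta),\dots,\psi_d(\theta))$ with $\psi_i(\theta)=\frac{\partial D}{\partial\theta_i}(\theta)$, and for $c\in\mathbb{R}^d$, $\psi(\theta)^Tc=\sum_i c_i\psi_i(\theta)$. Let $\psi^{(j)}=\psi(\theta^{(j)})$. $G_X^{(k)}$ is the $d\times d$ Gram matrix with entries $(\psi^{(k)}_i,\psi^{(k)}_j)_X$, $G_X^{(k,k-1)}$ is the cross-Gram matrix with entries $(\psi^{(k)}_i,\psi^{(k-1)}_j)_X$, and $\dagger$ denotes the Moore–Penrose pseudo-inverse. $G^{(k)}$ is any symmetric positive semi-definite $d\times d$ matrix (Gram matrix of $\psi^{(k)}$ for some inner product $W$) and $\nabla L(\theta^{(k)})\in\mathbb{R}^d$ is the gradient of the parameter loss $L=\mathcal{L}\circ D$; these terms are the same in both momenta. $H_D(\theta):\mathbb{R}^d\times\mathbb{R}^d\to H$ denotes the second derivative (Hessian) of $D$ at $\theta$, and the maximal curvature is $\kappa_{\max}(\theta)=\max_{q\in\mathbb{R}^d,\|q\|_2=1}\|H_D(\theta)(q,q)\|_X$. *)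

(* Defs.v *)
From HB Require Import structures.
From mathcomp Require Import all_boot all_order all_algebra.
From mathcomp Require Import all_classical all_reals all_analysis.
Set Implicit Arguments. Unset Strict Implicit. Unset Printing Implicit Defensive.
Import Order.TTheory GRing.Theory Num.Theory.
Import numFieldNormedType.Exports.
Local Open Scope classical_set_scope.
Local Open Scope ring_scope.

Section Defs.
Context {R : realType}.

Definition is_inner_product (H : normedModType R) (ip : H -> H -> R) : Prop :=
  [/\ (forall x y, ip x y = ip y x),
      (forall (a : R) (x y z : H), ip (a *: x + y) z = a * ip x z + ip y z) &
      (forall x, ip x x = `|x| ^+ 2)].

Definition evec (d : nat) (i : 'I_d) : 'cV[R]_d := delta_mx i 0.

Definition norm2 (d : nat) (c : 'cV[R]_d) : R := Num.sqrt (\sum_i c i 0 ^+ 2).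

Variable H : normedModType R.

Definition psi (d : nat) (D : 'cV[R]_d -> H) (th : 'cV[R]_d) (i : 'I_d) : H :=
  'd D th (evec i).

Definition psiT (d : nat) (D : 'cV[R]_d -> H) (th c : 'cV[R]_d) : H :=
  \sum_i c i 0 *: psi D th i.

Definition hessD (d : nat) (D : 'cV[R]_d -> H) (th u v : 'cV[R]_d) : H :=
  'd (fun x => 'd D x v) th u.

Definition C2 (d : nat) (D : 'cV[R]_d -> H) : Prop :=
  [/\ (forall x, differentiable D x),
      (forall v x, differentiable (fun y => 'd D y v) x) &
      (forall u v, continuous (fun x => hessD D x u v))].

Definition gram (d : nat) (ip : H -> H -> R) (D : 'cV[R]_d -> H)
  (th1 th2 : 'cV[R]_d) : 'M[R]_d :=
  \matrix_(i, j) ip (psi D th1 i) (psi D th2 j).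

Definition kappa_max (d : nat) (D : 'cV[R]_d -> H) (th : 'cV[R]_d) : R :=
  sup [set `|hessD D th q q| | q in [set q : 'cV[R]_d | norm2 q = 1]].

Definition gradL (d : nat) (Lf : H -> R) (D : 'cV[R]_d -> H) (th : 'cV[R]_d)
  : 'cV[R]_d := \col_i 'd (Lf \o D) th (evec i).

End Defs.

Definition penrose {R : realType} (d : nat) (A B : 'M[R]_d) : Prop :=
  [/\ A *m B *m A = A, B *m A *m B = B, (A *m B)^T = A *m B & (B *m A)^T = B *m A].

Definition mp_pinv {R : realType} (d : nat) (A : 'M[R]_d) : 'M[R]_d :=
  xget 0 [set B | penrose A B].

Definition sym_psd {R : realType} (d : nat) (A : 'M[R]_d) : Prop :=
  A^T = A /\ forall c : 'cV[R]_d, 0 <= (c^T *m A *m c) 0 0.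

(* Main.v *)
Require Import Defs.
From HB Require Import structures.
From mathcomp Require Import all_boot all_order all_algebra.
From mathcomp Require Import all_classical all_reals all_analysis.
From mathcomp Require Import lra.
Import Order.TTheory GRing.Theory Num.Theory.
Import numFieldNormedType.Exports.
Local Open Scope ring_scope.

Lemma rowvec_sq0 (R : realFieldType) n (w : 'rV[R]_n) : (w *m w^T) 0 0 = 0 -> w = 0.
Proof.
rewrite mxE => H; apply/rowP => j; rewrite mxE.
have P0 : forall k : 'I_n, xpredT k -> 0 <= w 0 k * w^T k 0.
  by move=> k _; rewrite mxE -expr2 sqr_ge0.
have := @psumr_eq0P R _ xpredT (fun j => w 0 j * w^T j 0) P0 H j isT.
by rewrite mxE => /eqP; rewrite mulf_eq0 orbb => /eqP.
Qed.

Lemma gram_unit (R : realFieldType) r n (M : 'M[R]_(r, n)) :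
  row_free M -> M *m M^T \in unitmx.
Proof.
move=> fM; rewrite -row_free_unit -kermx_eq0; apply/eqP/row_matrixP => i.
rewrite row0; set v := row i _.
have v0 : v *m (M *m M^T) = 0 by rewrite /v -row_mul mulmx_ker row0.
have : (v *m M) *m (v *m M)^T = 0 by rewrite trmx_mul mulmxA -(mulmxA v) v0 mul0mx.
move=> E; have /rowvec_sq0 : ((v *m M) *m (v *m M)^T) 0 0 = 0 by rewrite E mxE.
by move/eqP; rewrite mulmx_free_eq0 // => /eqP.
Qed.

Lemma penrose_fact (R : realFieldType) n r (F : 'M[R]_(n, r)) (G : 'M[R]_(r, n)) :
  row_free G -> row_free F^T -> exists B : 'M[R]_n, let A := F *m G in
  [/\ A *m B *m A = A, B *m A *m B = B, (A *m B)^T = A *m B & (B *m A)^T = B *m A].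
Proof.
move=> fG fF.
set FF := F^T *m F; set GG := G *m G^T.
have uG : GG \in unitmx by apply: gram_unit.
have uF : FF \in unitmx by rewrite /FF -[X in _ *m X]trmxK; apply: gram_unit.
set X := G^T *m invmx GG; set Y := invmx FF *m F^T.
have GX : G *m X = 1%:M by rewrite /X mulmxA mulmxV.
have YF : Y *m F = 1%:M by rewrite /Y -mulmxA mulVmx.
have sFF : FF^T = FF by rewrite /FF trmx_mul trmxK.
have sGG : GG^T = GG by rewrite /GG trmx_mul trmxK.
have AB : F *m G *m (X *m Y) = F *m Y by rewrite -mulmxA (mulmxA G) GX mul1mx.
have BA : X *m Y *m (F *m G) = X *m G by rewrite mulmxA -(mulmxA X) YF mulmx1.
exists (X *m Y); split.
- by rewrite AB mulmxA -(mulmxA F) YF mulmx1.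
- by rewrite BA -mulmxA (mulmxA G) GX mul1mx.
- by rewrite AB trmx_mul /Y trmx_mul trmxK trmx_inv sFF mulmxA.
- by rewrite BA trmx_mul /X trmx_mul trmxK trmx_inv sGG mulmxA.
Qed.

Lemma penrose_ex (R : realFieldType) n (A : 'M[R]_n) : exists B : 'M[R]_n,
  [/\ A *m B *m A = A, B *m A *m B = B, (A *m B)^T = A *m B & (B *m A)^T = B *m A].
Proof.
have [|B HB] := @penrose_fact R n _ (col_base A) (row_base A) (row_base_free A).
  by rewrite /row_free mxrank_tr; apply: col_base_full.
by exists B; move: HB; rewrite /= mulmx_base.
Qed.

Lemma penrose_uniq (R : realFieldType) n (A B C : 'M[R]_n) :
  [/\ A *m B *m A = A, B *m A *m B = B, (A *m B)^T = A *m B & (B *m A)^T = B *m A] ->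
  [/\ A *m C *m A = A, C *m A *m C = C, (A *m C)^T = A *m C & (C *m A)^T = C *m A] ->
  B = C.
Proof.
move=> [B1 B2 B3 B4] [C1 C2 C3 C4].
have eB : B = B *m A *m C.
  have e1 : B = B *m (B^T *m A^T) by rewrite -trmx_mul B3 mulmxA B2.
  have e2 : A^T = A^T *m (A *m C)^T by rewrite -trmx_mul C1.
  have e3 : B^T *m A^T = A *m B by rewrite -trmx_mul B3.
  rewrite {1}e1 {1}e2 (mulmxA B^T) e3 C3.
  by rewrite !mulmxA B2.
have eC : C = B *m A *m C.
  have e1 : C = A^T *m C^T *m C by rewrite -trmx_mul C4 C2.
  have e2 : A^T = (B *m A)^T *m A^T by rewrite -trmx_mul mulmxA B1.
  have e3 : A^T *m C^T = C *m A by rewrite -trmx_mul C4.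
  rewrite {1}e1 {1}e2 -(mulmxA _ A^T) e3 B4.
  by rewrite -!mulmxA (mulmxA C) C2.
by rewrite {1}eB -eC.
Qed.

Set Implicit Arguments. Unset Strict Implicit.

Definition Tm (R : realType) (H : normedModType R) d (v : 'I_d -> H) (c : 'cV[R]_d) : H :=
  \sum_i c i 0 *: v i.
Arguments Tm {R H d}.

Lemma ipZl (R : realType) (H : normedModType R) (ip : H -> H -> R) :
  is_inner_product ip -> forall a x z, ip (a *: x) z = a * ip x z.
Proof.
move=> [s l n] a x z.
have h0 : ip 0 z = 0.
  have := l (-1) 0 0 z; rewrite scaler0 addr0 mulN1r addNr //.
by have := l a x 0 z; rewrite addr0 h0 addr0.
Qed.

Lemma ipDl (R : realType) (H : normedModType R) (ip : H -> H -> R) :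
  is_inner_product ip -> forall x y z, ip (x + y) z = ip x z + ip y z.
Proof. by move=> [s l n] x y z; have := l 1 x y z; rewrite scale1r mul1r. Qed.

Lemma ipBl (R : realType) (H : normedModType R) (ip : H -> H -> R) :
  is_inner_product ip -> forall x y z, ip (x - y) z = ip x z - ip y z.
Proof.
move=> hip x y z; rewrite ipDl // -scaleN1r ipZl // mulN1r //.
Qed.

Lemma ipZr (R : realType) (H : normedModType R) (ip : H -> H -> R) :
  is_inner_product ip -> forall a x z, ip z (a *: x) = a * ip z x.
Proof. by move=> hip a x z; case: (hip) => s _ _; rewrite s ipZl // s. Qed.

Lemma ipBr (R : realType) (H : normedModType R) (ip : H -> H -> R) :
  is_inner_product ip -> forall x y z, ip z (x - y) = ip z x - ip z y.
Proof. by move=> hip x y z; case: (hip) => s _ _; rewrite s ipBl // s (s y). Qed.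

Lemma ipDr (R : realType) (H : normedModType R) (ip : H -> H -> R) :
  is_inner_product ip -> forall x y z, ip z (x + y) = ip z x + ip z y.
Proof. by move=> hip x y z; case: (hip) => s _ _; rewrite s ipDl // s (s y). Qed.

Lemma ip_suml (R : realType) (H : normedModType R) (ip : H -> H -> R) d :
  is_inner_product ip -> forall (v : 'I_d -> H) (c : 'I_d -> R) z,
  ip (\sum_i c i *: v i) z = \sum_i c i * ip (v i) z.
Proof.
move=> hip v c z; elim/big_rec2: _ => [|i y1 y2 _ <-]; last by rewrite ipDl // ipZl.
by have := ipZl hip 0 0 z; rewrite scale0r mul0r.
Qed.

Lemma ip_sumr (R : realType) (H : normedModType R) (ip : H -> H -> R) d :
  is_inner_product ip -> forall (v : 'I_d -> H) (c : 'I_d -> R) z,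
  ip z (\sum_i c i *: v i) = \sum_i c i * ip z (v i).
Proof.
move=> hip v c z; case: (hip) => s _ _; rewrite s ip_suml //.
by apply: eq_bigr => i _; rewrite s.
Qed.

Lemma ip_Tm_l (R : realType) (H : normedModType R) (ip : H -> H -> R) d :
  is_inner_product ip -> forall (v : 'I_d -> H) c z,
  ip (Tm v c) z = (c^T *m \col_i ip (v i) z) 0 0.
Proof.
move=> hip v c z; rewrite /Tm ip_suml // mxE.
by apply: eq_bigr => i _; rewrite !mxE.
Qed.

Lemma ip_Tm (R : realType) (H : normedModType R) (ip : H -> H -> R) d :
  is_inner_product ip -> forall (v w : 'I_d -> H) c c',
  ip (Tm v c) (Tm w c') = (c^T *m (\matrix_(i, j) ip (v i) (w j)) *m c') 0 0.
Proof.
move=> hip v w c c'; rewrite ip_Tm_l // !mxE.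
under [RHS]eq_bigr do rewrite !mxE big_distrl /=.
rewrite exchange_big /=; apply: eq_bigr => i _.
rewrite !mxE /Tm ip_sumr // big_distrr /=; apply: eq_bigr => j _.
by rewrite !mxE mulrCA mulrA [in RHS]mulrC mulrA.
Qed.

Lemma Tm_B (R : realType) (H : normedModType R) d (v : 'I_d -> H) c c' :
  Tm v (c - c') = Tm v c - Tm v c'.
Proof.
rewrite /Tm -sumrB; apply: eq_bigr => i _; by rewrite !mxE scalerBl.
Qed.

Lemma Tm_Z (R : realType) (H : normedModType R) d (v : 'I_d -> H) (a : R) c :
  Tm v (a *: c) = a *: Tm v c.
Proof.
rewrite /Tm scaler_sumr; apply: eq_bigr => i _; by rewrite !mxE scalerA.
Qed.

Lemma ip_proj_le (R : realType) (H : normedModType R) (ip : H -> H -> R) :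
  is_inner_product ip -> forall e y, ip y y = ip e y -> `|y| <= `|e|.
Proof.
move=> hip e y yy; have [s l nn] := hip.
have key : `|e| ^+ 2 = `|e - y| ^+ 2 + `|y| ^+ 2.
  rewrite -!nn ipBl // !ipBr // (s y e) -yy.
  by rewrite opprB addrA subrK subrK.
by rewrite -(@ler_sqr _ `|y| `|e|) ?nnegrE // key lerDr sqr_ge0.
Qed.

Lemma proj_bound (R : realType) (H : normedModType R) (ip : H -> H -> R) d :
  is_inner_product ip -> forall (v w : 'I_d -> H) (B : 'M[R]_d) (p : 'cV[R]_d),
  let P := \matrix_(i, j) ip (v i) (v j) in
  let C := \matrix_(i, j) ip (v i) (w j) in
  P *m B *m P = P -> B *m P *m B = B -> B^T = B ->
  `|Tm v p - Tm v (B *m C *m p)| <= `|Tm v p - Tm w p|.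
Proof.
move=> hip v w B p P C hPBP hBPB hBt.
have [s l nn] := hip.
set e := Tm v p - Tm w p.
set a := \col_i ip (v i) e.
have Cp : C *m p = P *m p - a.
  apply/colP => i; rewrite !mxE /e ipBr // /Tm !ip_sumr //.
  have -> : \sum_j P i j * p j 0 = \sum_j p j 0 * ip (v i) (v j).
    by apply: eq_bigr => j _; rewrite mxE mulrC.
  have -> : \sum_j C i j * p j 0 = \sum_j p j 0 * ip (v i) (w j).
    by apply: eq_bigr => j _; rewrite mxE mulrC.
  by rewrite opprB addrCA subrr addr0.
have ex : Tm v p - Tm v (B *m C *m p) = Tm v (p - B *m P *m p) + Tm v (B *m a).
  by rewrite -mulmxA Cp mulmxBr !Tm_B -mulmxA opprB addrCA addrC.
have z0 : Tm v (p - B *m P *m p) = 0.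
  set z := p - B *m P *m p.
  have Pz : P *m z = 0 by rewrite /z mulmxBr !mulmxA hPBP subrr.
  apply/eqP; rewrite -normr_eq0 -sqrf_eq0 -nn ip_Tm // -/P -mulmxA Pz mulmx0 mxE //.
set y := Tm v (B *m a).
have yy : ip y y = ip e y.
  rewrite s ip_Tm // -/P ip_Tm_l // -/a.
  rewrite trmx_mul hBt.
  have hh : B *m (P *m (B *m a)) = B *m a by rewrite !mulmxA hBPB.
  by rewrite -!mulmxA hh.
rewrite ex z0 add0r; exact: (@ip_proj_le _ _ ip hip e y yy).
Qed.

Lemma vec_expand (R : realType) d (c : 'cV[R]_d) : c = \sum_i c i 0 *: evec i.
Proof.
rewrite {1}[c]matrix_sum_delta; apply: eq_bigr => i _.
by rewrite big_ord1.
Qed.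

Lemma dlin (R : realType) (H : normedModType R) d (D : 'cV[R]_d -> H) x c :
  'd D x c = Tm (psi D x) c.
Proof.
rewrite {1}(vec_expand c) linear_sum; apply: eq_bigr => i _.
by rewrite linearZ.
Qed.


Lemma diff_lin_app (R : realType) (V W : normedModType R) (f g : V -> W) (a : R) x u :
  differentiable f x -> differentiable g x ->
  'd (a *: f + g) x u = a *: 'd f x u + 'd g x u.
Proof.
move=> df dg.
have dZ : differentiable (a *: f) x by apply: differentiableZ.
have E2 := diffD dZ dg.
have E3 := diffZ a df.
have E4 := congr1 (fun h => h u) E2.
apply: etrans E4 _.
have E5 := congr1 (fun h => h u) E3.
exact: (congr1 (fun t => t + 'd g x u) E5).
Qed.

Lemma hess_linv (R : realType) (H : normedModType R) d (D : 'cV[R]_d -> H) :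
  (forall v x, differentiable (fun y => 'd D y v) x) ->
  forall th u (a : R) v w,
  hessD D th u (a *: v + w) = a *: hessD D th u v + hessD D th u w.
Proof.
move=> dD th u a v w; rewrite /hessD.
have E : (fun x => 'd D x (a *: v + w)) =
          a *: (fun x => 'd D x v) + (fun x => 'd D x w).
  by apply/funext => x; rewrite !fctE (linearP ('d D x)).
rewrite E.
apply: diff_lin_app; by [].
Qed.

Lemma hess0v (R : realType) (H : normedModType R) d (D : 'cV[R]_d -> H) :
  (forall v x, differentiable (fun y => 'd D y v) x) ->
  forall th u, hessD D th u 0 = 0.
Proof.
move=> dD th u; have := hess_linv dD th u (-1) 0 0.
by rewrite scaler0 addr0 scaleN1r addNr.
Qed.

Lemma hess_sumv (R : realType) (H : normedModType R) d (D : 'cV[R]_d -> H) :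
  (forall v x, differentiable (fun y => 'd D y v) x) ->
  forall th u (c : 'I_d -> R) (v : 'I_d -> 'cV[R]_d),
  hessD D th u (\sum_j c j *: v j) = \sum_j c j *: hessD D th u (v j).
Proof.
move=> dD th u c v; elim/big_rec2: _ => [|i y1 y2 _ <-]; first exact: hess0v.
by rewrite hess_linv.
Qed.

Lemma lin_sumZ (R : realType) (V W : lmodType R) (g : {linear V -> W}) d
  (c : 'I_d -> R) (v : 'I_d -> V) :
  g (\sum_j c j *: v j) = \sum_j c j *: g (v j).
Proof. by rewrite linear_sum; apply: eq_bigr => i _; rewrite linearZ. Qed.

Lemma hess_sumu (R : realType) (H : normedModType R) d (D : 'cV[R]_d -> H) :
  forall th w (c : 'I_d -> R) (v : 'I_d -> 'cV[R]_d),
  hessD D th (\sum_j c j *: v j) w = \sum_j c j *: hessD D th (v j) w.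
Proof. by move=> th w c v; apply: lin_sumZ. Qed.

Lemma hessZu (R : realType) (H : normedModType R) d (D : 'cV[R]_d -> H) :
  forall th w (a : R) (v : 'cV[R]_d),
  hessD D th (a *: v) w = a *: hessD D th v w.
Proof. by move=> th w a v; apply: linearZ. Qed.

Lemma hessZZ (R : realType) (H : normedModType R) d (D : 'cV[R]_d -> H) :
  (forall v x, differentiable (fun y => 'd D y v) x) ->
  forall th (a : R) p, hessD D th (a *: p) (a *: p) = (a ^+ 2) *: hessD D th p p.
Proof.
move=> dD th a p.
rewrite hessZu.
have E := hess_linv dD th p a p 0.
rewrite (hess0v dD th p) in E.
rewrite [X in _ = X]addr0 in E.
rewrite [a *: p + 0]addr0 in E.
rewrite E.
by rewrite scalerA expr2.
Qed.

Lemma norm2_ge0 (R : realType) d (c : 'cV[R]_d) : 0 <= norm2 c.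
Proof. exact: sqrtr_ge0. Qed.

Lemma norm2_sq (R : realType) d (c : 'cV[R]_d) : norm2 c ^+ 2 = \sum_i c i 0 ^+ 2.
Proof. by rewrite sqr_sqrtr // sumr_ge0 // => i _; rewrite sqr_ge0. Qed.

Lemma norm2_entry (R : realType) d (c : 'cV[R]_d) i : `|c i 0| <= norm2 c.
Proof.
rewrite -sqrtr_sqr /norm2 ler_sqrt; last by rewrite sumr_ge0 // => j _; rewrite sqr_ge0.
rewrite (bigD1 i) //= lerDl sumr_ge0 // => j _; exact: sqr_ge0.
Qed.

Lemma norm2_Z (R : realType) d (a : R) (c : 'cV[R]_d) : norm2 (a *: c) = `|a| * norm2 c.
Proof.
rewrite /norm2 -sqrtr_sqr -sqrtrM ?sqr_ge0 // mulr_sumr; congr Num.sqrt.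
by apply: eq_bigr => i _; rewrite mxE exprMn.
Qed.

Lemma mxnorm_le (R : realType) d (c : 'cV[R]_d) : `|c| <= norm2 c.
Proof.
rewrite [leLHS]/Num.norm /= mx_normrE; apply: bigmax_le; first exact: norm2_ge0.
by move=> [i j] _ /=; rewrite ord1; apply: norm2_entry.
Qed.

Lemma hess_expand (R : realType) (H : normedModType R) d (D : 'cV[R]_d -> H) :
  (forall v x, differentiable (fun y => 'd D y v) x) ->
  forall th q, hessD D th q q =
    \sum_i \sum_j (q i 0 * q j 0) *: hessD D th (evec i) (evec j).
Proof.
move=> dD th q.
have E := vec_expand q.
transitivity (hessD D th (\sum_i q i 0 *: evec i) (\sum_j q j 0 *: evec j)).
  by rewrite -E.
rewrite hess_sumu; apply: eq_bigr => i _.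
rewrite hess_sumv // scaler_sumr; apply: eq_bigr => j _.
by rewrite scalerA.
Qed.

Lemma hess_bound (R : realType) (H : normedModType R) d (D : 'cV[R]_d -> H) :
  (forall v x, differentiable (fun y => 'd D y v) x) ->
  forall th q, `|hessD D th q q| <=
    norm2 q ^+ 2 * \sum_i \sum_j `|hessD D th (evec i) (evec j)|.
Proof.
move=> dD th q; rewrite hess_expand //.
apply: (le_trans (ler_norm_sum _ _ _)); rewrite mulr_sumr; apply: ler_sum => i _.
apply: (le_trans (ler_norm_sum _ _ _)); rewrite mulr_sumr; apply: ler_sum => j _.
rewrite normrZ ler_wpM2r // normrM expr2.
by apply: ler_pM => //; apply: norm2_entry.
Qed.

Lemma kappa_bound (R : realType) (H : normedModType R) d (D : 'cV[R]_d -> H) :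
  (forall v x, differentiable (fun y => 'd D y v) x) ->
  forall th p, `|hessD D th p p| <= kappa_max D th * norm2 p ^+ 2.
Proof.
move=> dD th p.
set M := \sum_i \sum_j `|hessD D th (evec i) (evec j)|.
have [n0|npos] := eqVneq (norm2 p) 0.
  by have := hess_bound dD th p; rewrite n0 expr0n /= mul0r mulr0.
have ngt0 : 0 < norm2 p by rewrite lt_def npos norm2_ge0.
set q := (norm2 p)^-1 *: p.
have nq : norm2 q = 1.
  by rewrite norm2_Z ger0_norm ?invr_ge0 ?norm2_ge0 // mulVf.
have ep : p = norm2 p *: q by rewrite /q scalerA mulfV // scale1r.
have hq : `|hessD D th q q| <= kappa_max D th.
  apply: ub_le_sup; last by exists q.
  exists M => _ [r /= nr <-]; have := hess_bound dD th r; rewrite nr expr1n mul1r.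
  done.
rewrite ep hessZZ // normrZ ger0_norm ?sqr_ge0 // mulrC norm2_Z.
rewrite ger0_norm ?norm2_ge0 // nq mulr1.
by rewrite ler_wpM2r // sqr_ge0.
Qed.

Lemma subDsub (W : zmodType) (a b c : W) : a - (b + c) = a - b - c.
Proof. by rewrite opprD addrA. Qed.

Lemma rem_unif (R : realType) (H : normedModType R) d (D : 'cV[R]_d -> H) :
  (forall v x, differentiable (fun y => 'd D y v) x) ->
  forall th (eps : R), 0 < eps -> exists2 del : R, 0 < del &
  forall y : 'cV[R]_d, `|y| < del -> forall i,
  `|'d D (th + y) (evec i) - 'd D th (evec i) - hessD D th y (evec i)| <= eps * `|y|.
Proof.
move=> dD th eps e0.
have L : forall i : 'I_d, \forall y \near (0 : 'cV[R]_d),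
    `|'d D (th + y) (evec i) - 'd D th (evec i) - hessD D th y (evec i)| <= eps * `|y|.
  move=> i; have /eqaddoP L := diff_locally (dD (evec i) th).
  have := L eps e0; apply: filterS => y.
  rewrite !fctE => Hy.
  rewrite -subDsub [th + y]addrC; exact: Hy.
have H0 := @filter_forall _ _ _ (nbhs (0 : 'cV[R]_d)) _ L.
have [del del0 P] := iffLR nbhs_norm0P (H0 _).
by exists del => // y hy; apply: P.
Qed.

Lemma lmod_aux (R : realType) (W : lmodType R) (a h : R) (x y Hv : W) :
  a *: (x - y) = h *: (a *: Hv) - a *: (y - x - (- h) *: Hv).
Proof.
by rewrite scaleNr opprK scalerBr scalerDr scalerBr scalerA mulrC -scalerA
  opprD opprB addrCA subrr addr0 addrC.
Qed.

Lemma pinv_props (R : realType) d (P : 'M[R]_d) : P^T = P ->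
  let B := mp_pinv P in
  [/\ P *m B *m P = P, B *m P *m B = B & B^T = B].
Proof.
move=> sP B.
have pB : penrose P B by rewrite /B /mp_pinv; apply: xgetPex; exact: penrose_ex.
case: (pB) => p1 p2 p3 p4; split => //.
apply/esym; apply: (@penrose_uniq _ _ P B B^T pB); split.
- have e : P *m B^T *m P = (P^T *m B *m P^T)^T by rewrite !trmx_mul !trmxK mulmxA.
  by rewrite e sP p1 sP.
- have e : B^T *m P *m B^T = (B *m P^T *m B)^T by rewrite !trmx_mul !trmxK mulmxA.
  by rewrite e sP p2.
- by rewrite trmx_mul trmxK sP -p4 trmx_mul sP.
- by rewrite trmx_mul trmxK sP -p3 trmx_mul sP.
Qed.

Lemma fin_ineq (R : realType) (beta hk1 kap n eps eps' dR Y : R) :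
  0 <= beta -> 0 < hk1 -> 0 <= n -> 0 < eps' -> 0 <= dR ->
  eps' * ((beta + 1) * (dR + 1)) = eps ->
  Y <= hk1 * (kap * n ^+ 2) + dR * (n * (eps' * (hk1 * n))) ->
  beta * Y <= hk1 * beta * kap * n ^+ 2 + eps * (hk1 * n ^+ 2).
Proof.
move=> b0 h0 n0 e0 d0 ek HY.
have key : beta * dR * eps' <= eps.
  rewrite -ek; have := mulr_ge0 (ltW e0) (addr_ge0 (addr_ge0 b0 d0) ler01).
  move=> h; nra.
have X0 : 0 <= hk1 * n ^+ 2 by apply: mulr_ge0; [exact: ltW | exact: sqr_ge0].
have kX := ler_wpM2r X0 key.
have bY := ler_wpM2l b0 HY.
nra.
Qed.


Unset Implicit Arguments. Set Strict Implicit.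

Theorem mainTheorem3 (R : realType) (d : nat) (H : normedModType R)
  (ip : H -> H -> R) (D : 'cV[R]_d -> H) (Lf : H -> R) (G : 'M[R]_d)
  (thk : 'cV[R]_d) (hk beta : R) :
  is_inner_product ip -> C2 D -> (forall x, differentiable Lf x) ->
  sym_psd G -> 0 < hk -> 0 <= beta ->
  forall eps : R, 0 < eps -> exists delta : R, 0 < delta /\
  forall (hk1 : R) (pk1 : 'cV[R]_d), 0 < hk1 -> hk1 * norm2 pk1 < delta ->
  let thk1 := thk - hk1 *: pk1 in
  let pk := beta *: (mp_pinv (gram ip D thk thk) *m gram ip D thk thk1 *m pk1)
            - hk *: (mp_pinv G *m gradL Lf D thk) in
  let pbar := beta *: pk1 - hk *: (mp_pinv G *m gradL Lf D thk) in
  `| psiT D thk pbar - psiT D thk pk |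
    <= hk1 * beta * kappa_max D thk * norm2 pk1 ^+ 2
       + eps * (hk1 * norm2 pk1 ^+ 2).
Proof.
move=> hip [dD1 dD2 _] _ _ hk0 beta0 eps eps0.
set eps' := eps / ((beta + 1) * (d%:R + 1)).
have eps'0 : 0 < eps'.
  by rewrite /eps' divr_gt0 // mulr_gt0 // ltr_wpDl // ler0n.
have [del del0 Hdel] := rem_unif dD2 thk eps'0.
exists del; split => // hk1 pk1 hk10 hlt.
cbv zeta.
set thk1 := thk - hk1 *: pk1.
set pbar := beta *: pk1 - _.
set pk := beta *: _ - _.
set P := gram ip D thk thk.
have sP : P^T = P.
  apply/matrixP => i j; rewrite !mxE; by case: hip => s _ _; rewrite s.
have [pPBP pBPB pBt] := @pinv_props _ _ P sP.
set B := mp_pinv P.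
set C := gram ip D thk thk1.
set g := mp_pinv G *m gradL Lf D thk.
set v := psi D thk; set w := psi D thk1.
have E1 : psiT D thk pbar - psiT D thk pk = beta *: (Tm v pk1 - Tm v (B *m C *m pk1)).
  rewrite -[psiT D thk pbar]/(Tm v pbar) -[psiT D thk pk]/(Tm v pk) -Tm_B.
  rewrite -Tm_B -Tm_Z scalerBr; congr (Tm v _).
  by rewrite /pbar /pk opprB addrA subrK.
have E2 := @proj_bound _ _ ip d hip v w B pk1 pPBP pBPB pBt.
set n := norm2 pk1.
have n0 : 0 <= n := norm2_ge0 pk1.
set y := - (hk1 *: pk1).
have hy : forall i, hessD D thk y (evec i) = (- hk1) *: hessD D thk pk1 (evec i).
  by move=> i; rewrite /y -scaleNr hessZu.
have ny : `|y| <= hk1 * n.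
  by rewrite /y normrN normrZ gtr0_norm // ler_pM2l //; exact: mxnorm_le.
have Hr := Hdel y (le_lt_trans ny hlt).
set r := fun i => 'd D (thk + y) (evec i) - 'd D thk (evec i) - hessD D thk y (evec i).
have hpp : hessD D thk pk1 pk1 = \sum_i pk1 i 0 *: hessD D thk pk1 (evec i).
  by have := hess_sumv dD2 thk pk1 (fun i => pk1 i 0) (@evec R d); rewrite -vec_expand.
have eE : Tm v pk1 - Tm w pk1 = hk1 *: hessD D thk pk1 pk1 - \sum_i pk1 i 0 *: r i.
  rewrite hpp scaler_sumr /Tm -!sumrB; apply: eq_bigr => i _.
  rewrite -scalerBr /r hy; exact: lmod_aux.
have Be : `|Tm v pk1 - Tm w pk1| <=
    hk1 * (kappa_max D thk * n ^+ 2) + d%:R * (n * (eps' * (hk1 * n))).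
  rewrite eE; apply: (le_trans (ler_normB _ _)); apply: lerD.
    rewrite normrZ gtr0_norm // ler_pM2l //; exact: kappa_bound.
  apply: (le_trans (ler_norm_sum _ _ _)).
  have -> : d%:R * (n * (eps' * (hk1 * n))) = \sum_(i < d) (n * (eps' * (hk1 * n))).
    by rewrite sumr_const card_ord mulr_natl.
  apply: ler_sum => i _; rewrite normrZ; apply: ler_pM => //; first exact: norm2_entry.
  apply: le_trans (Hr i) _; apply: ler_wpM2l; [exact: ltW | exact: ny].
rewrite E1 normrZ ger0_norm //.
have d0 : 0 <= (d%:R : R) by rewrite ler0n.
have ek : eps' * ((beta + 1) * (d%:R + 1)) = eps.
  by rewrite /eps' mulfVK // mulf_neq0 // lt0r_neq0 // ltr_wpDl.
exact: (@fin_ineq _ _ _ _ _ _ _ _ _ beta0 hk10 n0 eps'0 d0 ek (le_trans E2 Be)).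
Qed.
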